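(* Let $S$ be a numerical semigroup with conductor $c$, enumerated as $S=\{0=\rho_1<\rho_2<\cdots\}$, and let $m\ge 2c-1$. Let $M=\{m_1<\cdots<m_r\}\subseteq S$ be an $(S,m,r)$-amenable set. Then (a) $m_i\le m+\rho_i$ for all $i\in\{1,\ldots,r\}$, and (b) $m_{i+1}-m_i\le\rho_2$ for all $i\in\{1,\ldots,r-1\}$.
   Context: A numerical semigroup is a submonoid of $\mathbb N$ with finite complement; its conductor $c$ is the least element of $S$ such that $c+n\in S$ for all $n\in\mathbb N$. For $x\in S$, $\mathrm D(x)=\{\alpha\in S\mid x-\alpha\in S\}$. A set $M=\{m_1<\cdots<m_r\}\subseteq S$ with $2c-1\le m=m_1$ is $(S,m,r)$-amenable if $\mathrm D(m_i)\cap[m,\infty)\subseteq M$ for all $i\in\{1,\ldots,r\}$. *)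

(* Defs.v *)
From mathcomp Require Import all_boot.
Set Implicit Arguments. Unset Strict Implicit. Unset Printing Implicit Defensive.

Definition numerical_semigroup (S : pred nat) : Prop :=
  S 0 /\ (forall x y, S x -> S y -> S (x + y)) /\
  (exists N, forall n, N <= n -> S n).

Definition is_conductor (S : pred nat) (c : nat) : Prop :=
  S c /\ (forall n, S (c + n)) /\
  (forall c', S c' -> (forall n, S (c' + n)) -> c <= c').

(* Enumeration S = {rho_1 < rho_2 < ...}: [is_rho S k x] means x = rho_{k+1},
   i.e. x is in S and exactly k elements of S are smaller than x
   (0-based index k). *)
Definition is_rho (S : pred nat) (k x : nat) : bool :=
  S x && (count S (iota 0 x) == k).

Definition inD (S : pred nat) (x a : nat) : bool :=
  [&& S a, a <= x & S (x - a)].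

Definition amenable (S : pred nat) (c m r : nat) (M : seq nat) : Prop :=
  size M = r /\ 0 < r /\ sorted ltn M /\ all S M /\ head 0 M = m /\
  2 * c - 1 <= m /\
  (forall i, i < r -> forall a, inD S (nth 0 M i) a -> m <= a -> a \in M).

(* Main.v *)
Require Import Defs.
From mathcomp Require Import all_boot.
From mathcomp Require Import zify.

Lemma inM_take (M : seq nat) y i : sorted ltn M -> y \in M ->
  y <= nth 0 M i -> i < size M -> y \in take i.+1 M.
Proof.
move=> so /(nthP 0) [j jl <-] le il.
case: (leqP j i) => ji.
  rewrite -(@nth_take i.+1 _ 0 j) ?ltnS //; apply: mem_nth; rewrite size_take; case: ifP; lia.
have := sorted_ltn_nth ltn_trans 0 so; move=> /(_ i j il jl ji) h; by have := leq_ltn_trans le h; rewrite ltnn.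
Qed.

Lemma nth_ge_head (M : seq nat) i : sorted ltn M -> i < size M ->
  head 0 M <= nth 0 M i.
Proof.
move=> so il; case: i il => [|i] il; first by case: M so il.
have := sorted_ltn_nth ltn_trans 0 so.
move=> /(_ 0 i.+1 (leq_ltn_trans (leq0n _) il) il (ltn0Sn _)).
by case: M so il => //= a l _ _ /ltnW.
Qed.

Theorem proposition3p8 (S : pred nat) (c m r : nat) (M : seq nat) :
  numerical_semigroup S -> is_conductor S c -> 2 * c - 1 <= m ->
  amenable S c m r M ->
  (forall i, i < r -> forall x, is_rho S i x -> nth 0 M i <= m + x) /\
  (forall i, i.+1 < r -> forall x, is_rho S 1 x ->
     nth 0 M i.+1 - nth 0 M i <= x).
Proof.
move=> _ [Sc [Scn _]] _ [sz [r0 [so [allS [hd [hm amen]]]]]].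
have SS : forall y, m <= y -> S y.
  move=> y my; have -> : y = c + (y - c) by lia. exact: Scn.
have geM : forall i, i < r -> m <= nth 0 M i.
  by move=> i il; rewrite -hd; apply: nth_ge_head; rewrite ?sz.
split.
- move=> i il x /andP [Sx /eqP cx].
  rewrite leqNgt; apply/negP => bad.
  pose F := filter S (iota 0 x.+1).
  pose T := m :: [seq nth 0 M i - s | s <- F].
  have szF : size F = i.+1.
    rewrite /F size_filter -(addn1 x) iotaD count_cat cx /= Sx. by rewrite addn1.
  have uT : uniq T.
    rewrite /T /= map_inj_in_uniq; last first.
      move=> a b; rewrite !mem_filter !mem_iota => /andP [_ /andP [_ al]] /andP [_ /andP [_ bl]] e; lia.
    rewrite filter_uniq ?iota_uniq // andbT.
    apply/negP => /mapP [s]; rewrite mem_filter mem_iota => /andP [_ /andP [_ sl]] e; lia.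
  have sub : {subset T <= take i.+1 M}.
    move=> y; rewrite inE => /orP [/eqP ->|].
      apply: inM_take => //; last by rewrite sz.
        rewrite -hd -nth0; apply: mem_nth; rewrite sz //.
      exact: geM.
    move=> /mapP [s]; rewrite mem_filter mem_iota => /andP [Ss /andP [_ sl]] ->.
    apply: inM_take => //; last by rewrite sz.
      apply: (amen i il); last by lia.
      rewrite /inD SS ?leq_subr /=; last by lia.
      have -> : nth 0 M i - (nth 0 M i - s) = s by lia.
      by [].
    exact: leq_subr.
  have := uniq_leq_size uT sub; rewrite size_take /= size_map szF sz; case: ifP; lia.
- move=> i il x /andP [Sx /eqP cx].
  have x0 : 0 < x by case: x cx {Sx}.
  rewrite leqNgt; apply/negP => bad.
  have il' : i < r by lia.
  have gi := geM i il'.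
  have hin : nth 0 M i.+1 - x \in M.
    apply: (amen i.+1 il); last by lia.
    rewrite /inD SS ?leq_subr /=; last by lia.
    by have -> : nth 0 M i.+1 - (nth 0 M i.+1 - x) = x by lia.
  move: hin => /(nthP 0) [j jl ej0].
  have ej : @nth nat 0 M j = nth 0 M i.+1 - x := ej0.
  have hom := sorted_ltn_nth ltn_trans 0 so.
  rewrite -sz in il il'.
  case: (ltngtP j i) => ji.
  + have := hom j i jl il' ji; lia.
  + have ij : i.+1 <= j by [].
    case: (ltngtP j i.+1) => ji2; [lia| |].
    * have := hom i.+1 j il jl ji2; lia.
    * subst j; lia.
  + subst j; lia.
Qed.
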